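(* Let $f:\mathbb{R}^n \to \mathbb{R}$ be strongly convex and piecewise linear-quadratic, with a fixed representation by polyhedral sets $F_1,\dots,F_p$ as described in the context, and let $C \subset \mathbb{R}^n$ be a nonempty closed convex set. Then for every $R>0$ there exists $L>0$ such that for all $x \in B_R$ and all $x^* \in \partial f(x)$, \[ \operatorname{dist}_f^{x^*}(x,C)^2 \le \begin{cases} L \cdot \operatorname{dist}(x,C)^2, & \text{if } F_x \cap C=\emptyset, \\ L \cdot \operatorname{dist}(x,F_x \cap C)^2, & \text{if } F_x \cap C \neq\emptyset. \end{cases} \]
   Context: $f$ is strongly convex if there is $\alpha>0$ with $f(y)\ge f(x)+\langle x^*,y-x\rangle+\frac{\alpha}{2}\|y-x\|_2^2$ for all $x,y\in\mathbb{R}^n$, $x^*\in\partial f(x)$. A convex $f:\mathbb{R}^n\to\mathbb{R}$ is piecewise linear-quadratic if there are finitely many polyhedral sets $F_i\subset\mathbb{R}^n$, $i\in I=\{1,\dots,p\}$, whose union is $\mathbb{R}^n$, such that on each $F_i$, $f(x)=\frac12\langle x,A_ix\rangle+\langle a_i,x\rangle+\alpha_i$ with symmetric positive semidefinite $A_i\in\mathbb{R}^{n\times n}$, $a_i\in\mathbb{R}^n$, $\alpha_i\in\mathbb{R}$. For $x\in\mathbb{R}^n$ set $I_f(x)=\{i\in I: x\in F_i\}$ and $F_x=\bigcap_{i\in I_f(x)}F_i$. $B_R=\{x\in\mathbb{R}^n:\|x\|_2\le R\}$. For $x^*\in\partial f(x)$, the Bregman distance is $D_f^{x^*}(x,y)=f(y)-f(x)-\langle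 x^*,y-x\rangle$ and $\operatorname{dist}_f^{x^*}(x,C)^2:=\min_{y\in C}D_f^{x^*}(x,y)$. $\operatorname{dist}(x,S)$ is the Euclidean distance from $x$ to a set $S$. *)

(* Defs.v *)
From HB Require Import structures.
From mathcomp Require Import all_boot all_order all_algebra.
From mathcomp Require Import all_classical all_reals all_analysis.
Set Implicit Arguments. Unset Strict Implicit. Unset Printing Implicit Defensive.
Import Order.TTheory GRing.Theory Num.Theory.
Import numFieldNormedType.Exports.
Local Open Scope ring_scope.
Local Open Scope classical_set_scope.

Section Defs.
Variables (R : realType) (n : nat).

Definition dotp (u v : 'rV[R]_n) : R := \sum_(i < n) u 0 i * v 0 i.
Definition norm2 (u : 'rV[R]_n) : R := Num.sqrt (dotp u u).

Definition dist (x : 'rV[R]_n) (S : set 'rV[R]_n) : R :=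
  inf [set norm2 (x - y) | y in S].

Definition subdiff (f : 'rV[R]_n -> R) (x : 'rV[R]_n) : set 'rV[R]_n :=
  [set xs | forall y, f x + dotp xs (y - x) <= f y].

Definition strongly_convex (f : 'rV[R]_n -> R) : Prop :=
  exists alpha : R, 0 < alpha /\
    forall x y xs, subdiff f x xs ->
      f x + dotp xs (y - x) + alpha / 2 * (norm2 (y - x)) ^+ 2 <= f y.

Definition polyhedral (P : set 'rV[R]_n) : Prop :=
  exists (m : nat) (A : 'M[R]_(m, n)) (b : 'rV[R]_m),
    P = [set x | forall j, (x *m A^T) 0 j <= b 0 j].

Definition sym_psd (A : 'M[R]_n) : Prop :=
  A^T = A /\ forall x : 'rV[R]_n, 0 <= (x *m A *m x^T) 0 0.

Definition plq_rep (p : nat) (f : 'rV[R]_n -> R) (F : 'I_p -> set 'rV[R]_n)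
    (Q : 'I_p -> 'M[R]_n) (a : 'I_p -> 'rV[R]_n) (al : 'I_p -> R) : Prop :=
  (forall i, polyhedral (F i)) /\
  \bigcup_(i in [set: 'I_p]) F i = [set: 'rV[R]_n] /\
  forall i, sym_psd (Q i) /\
    forall x, F i x -> f x = 2^-1 * (x *m Q i *m x^T) 0 0 + dotp (a i) x + al i.

Definition Fx (p : nat) (F : 'I_p -> set 'rV[R]_n) (x : 'rV[R]_n) : set 'rV[R]_n :=
  \bigcap_(i in [set i | F i x]) F i.

Definition bregman (f : 'rV[R]_n -> R) (xs x y : 'rV[R]_n) : R :=
  f y - f x - dotp xs (y - x).

(* dist_f^{x*}(x,C)^2 := min_{y in C} D_f^{x*}(x,y)  (written as an infimum) *)
Definition distf2 (f : 'rV[R]_n -> R) (xs x : 'rV[R]_n) (C : set 'rV[R]_n) : R :=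
  inf [set bregman f xs x y | y in C].

Definition convexS (C : set 'rV[R]_n) : Prop :=
  forall x y (t : R), C x -> C y -> 0 <= t -> t <= 1 -> C ((1 - t) *: x + t *: y).

End Defs.

(* Main.v *)
Require Import Defs.
From HB Require Import structures.
From mathcomp Require Import all_boot all_order all_algebra.
From mathcomp Require Import all_classical all_reals all_analysis.
From mathcomp Require Import ring lra.
Import Order.TTheory GRing.Theory Num.Theory.
Import numFieldNormedType.Exports.
Local Open Scope ring_scope.
Local Open Scope classical_set_scope.

Section Helpers.
Context {R : realType} {n : nat}.
Implicit Types (u v w : 'rV[R]_n).

Lemma dotpDr u v w : dotp u (v + w) = dotp u v + dotp u w.
Proof. by rewrite /dotp -big_split; apply: eq_bigr => i _; rewrite mxE mulrDr. Qed.

Lemma dotpZr u (c : R) v : dotp u (c *: v) = c * dotp u v.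
Proof. by rewrite /dotp mulr_sumr; apply: eq_bigr => i _; rewrite mxE mulrCA. Qed.

Lemma dotpNr u v : dotp u (- v) = - dotp u v.
Proof. by rewrite -scaleN1r dotpZr mulN1r. Qed.

Lemma dotp_ge0 u : 0 <= dotp u u.
Proof. by apply: sumr_ge0 => i _; rewrite -expr2 sqr_ge0. Qed.

Lemma norm2_ge0 u : 0 <= norm2 u.
Proof. exact: sqrtr_ge0. Qed.

Lemma coord_le_norm2 u k : `|u 0 k| <= norm2 u.
Proof.
rewrite /norm2 -sqrtr_sqr ler_sqrt ?dotp_ge0 // /dotp (bigD1 k) //= expr2 lerDl.
by apply: sumr_ge0 => i _; rewrite -expr2 sqr_ge0.
Qed.

Lemma mx_le_norm2 u : `|u| <= norm2 u.
Proof.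
rewrite [`|u|]/Num.Def.normr /= mx_normrE; apply: bigmax_le => [|[i j] _]; first exact: norm2_ge0.
by rewrite /= (ord1 i); exact: coord_le_norm2.
Qed.

Definition Bq (Q : 'M[R]_n) u v : R := (u *m Q *m v^T) 0 0.

Lemma Bq_sym Q u v : Q^T = Q -> Bq Q u v = Bq Q v u.
Proof.
move=> sQ; rewrite /Bq.
have h (A : 'M[R]_1) : A 0 0 = A^T 0 0 by rewrite mxE.
rewrite [LHS]h.
by rewrite !trmx_mul trmxK sQ mulmxA.
Qed.

Lemma BqDl Q u v w : Bq Q (u + v) w = Bq Q u w + Bq Q v w.
Proof. by rewrite /Bq !mulmxDl mxE. Qed.
Lemma BqDr Q u v w : Bq Q u (v + w) = Bq Q u v + Bq Q u w.
Proof. by rewrite /Bq linearD /= mulmxDr mxE. Qed.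
Lemma BqZl Q c u w : Bq Q (c *: u) w = c * Bq Q u w.
Proof. by rewrite /Bq -!scalemxAl mxE. Qed.
Lemma BqZr Q c u w : Bq Q u (c *: w) = c * Bq Q u w.
Proof. by rewrite /Bq linearZ /= -scalemxAr mxE. Qed.

Lemma Bq_expand Q x d (c : R) : Q^T = Q ->
  Bq Q (x + c *: d) (x + c *: d) = Bq Q x x + 2 * c * Bq Q x d + c ^+ 2 * Bq Q d d.
Proof.
move=> sQ; rewrite !BqDl !BqDr !BqZl !BqZr (Bq_sym _ d x) //.
by rewrite expr2; ring.
Qed.

Lemma dotp_expand (a x d : 'rV[R]_n) (c : R) : dotp a (x + c *: d) = dotp a x + c * dotp a d.
Proof. by rewrite dotpDr dotpZr. Qed.

Lemma Bq_bound Q {d : 'rV[R]_n} {N : R} : (forall k, `|d 0 k| <= N) ->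
  `|Bq Q d d| <= (\sum_l \sum_k `|Q k l|) * N ^+ 2.
Proof.
move=> hN; rewrite /Bq !mxE.
rewrite mulr_suml; apply: (le_trans (ler_norm_sum _ _ _)); apply: ler_sum => l _.
rewrite mxE [d^T l 0]mxE !mulr_suml; apply: (le_trans (ler_norm_sum _ _ _)).
apply: ler_sum => k _; rewrite !normrM.
have := hN k; have := hN l; have := normr_ge0 (Q k l); have := normr_ge0 (d 0 k);
  have := normr_ge0 (d 0 l).
move=> h0 h1 h2 h3 h4.
have e1 : 0 <= (N - `|d 0 k|) * (`|Q k l| * `|d 0 l|) by rewrite mulr_ge0 ?subr_ge0 ?mulr_ge0.
have e2 : 0 <= (N - `|d 0 l|) * (`|Q k l| * N) by rewrite mulr_ge0 ?subr_ge0 ?mulr_ge0 // (le_trans h0 h3).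
nra.
Qed.

Lemma core2 (f : 'rV[R]_n -> R) Q (a : 'rV[R]_n) (al : R) (x d xs : 'rV[R]_n) (t : R) :
  Q^T = Q -> 0 <= Bq Q d d ->
  f x = 2^-1 * Bq Q x x + dotp a x + al ->
  f (x + 1 *: d) = 2^-1 * Bq Q (x + 1 *: d) (x + 1 *: d) + dotp a (x + 1 *: d) + al ->
  f (x + (- t) *: d) = 2^-1 * Bq Q (x + (- t) *: d) (x + (- t) *: d) + dotp a (x + (- t) *: d) + al ->
  f x + dotp xs ((x + (-t) *: d) - x) <= f (x + (-t) *: d) -> 0 < t -> t <= 1 ->
  f (x + 1 *: d) - f x - dotp xs d <= Bq Q d d.
Proof.
move=> sQ c0 hx hy ht hs t0 t1.
move: hs; rewrite [_ + _ - x]addrAC subrr add0r dotpZr hy ht hx !Bq_expand // !dotp_expand => hs.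
set A := Bq Q x x in hs *; set b := Bq Q x d in hs *; set c := Bq Q d d in hs c0 *.
set al' := dotp a x in hs *; set be := dotp a d in hs *; set s := dotp xs d in hs *.
have k1 : t * (b + be - s) <= t * (t * c / 2) by move: hs; lra.
rewrite ler_pM2l // in k1.
have k2 : 0 <= (1 - t) * c by rewrite mulr_ge0 // subr_ge0.
lra.
Qed.

Lemma fin_small (T : finType) (P : T -> R -> Prop) :
  (forall i, exists2 t, 0 < t & forall s, 0 < s -> s <= t -> P i s) ->
  exists2 t, 0 < t & forall i, P i t.
Proof.
move=> H.
suff [t t0 Ht] : exists2 t, 0 < t & forall i, i \in enum T -> forall s, 0 < s -> s <= t -> P i s.
  by exists t => // i; apply: Ht => //; rewrite mem_enum.
elim: (enum T) => [|i s [t t0 Ht]]; first by exists 1.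
have [ti ti0 Hti] := H i.
exists (Num.min t ti); first by rewrite lt_min t0 ti0.
move=> j; rewrite in_cons => /orP[/eqP -> | js] u u0; rewrite le_min => /andP[h1 h2].
  exact: Hti.
exact: Ht.
Qed.

Lemma dotp_bound (a : 'rV[R]_n) {d : 'rV[R]_n} {N : R} : (forall k, `|d 0 k| <= N) ->
  `|dotp a d| <= (\sum_k `|a 0 k|) * N.
Proof.
move=> hN; rewrite /dotp mulr_suml; apply: (le_trans (ler_norm_sum _ _ _)).
apply: ler_sum => k _; rewrite normrM; apply: ler_wpM2l => //.
Qed.

Definition Mb p (Q : 'I_p -> 'M[R]_n) (a : 'I_p -> 'rV[R]_n) (al : 'I_p -> R) (N : R) :=
  \sum_j ((\sum_l \sum_k `|Q j k l|) * N ^+ 2 + (\sum_k `|a j 0 k|) * N + `|al j|).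

Lemma fbound (p : nat) f F Q a al (z : 'rV[R]_n) (N : R) : plq_rep f F Q a al -> 0 <= N ->
  (forall k, `|z 0 k| <= N) -> `|f z| <= Mb p Q a al N.
Proof.
move=> [_ [hcov hq]] N0 hN.
have : (\bigcup_(i in setT) F i) z by rewrite hcov.
case=> j _ Fjz; rewrite (proj2 (hq j) z Fjz).
have t0 : forall i, 0 <= (\sum_l \sum_k `|Q i k l|) * N ^+ 2 + (\sum_k `|a i 0 k|) * N + `|al i|.
  move=> i; rewrite !addr_ge0 ?mulr_ge0 ?sumr_ge0 ?exprn_ge0 // => *; rewrite ?sumr_ge0 //.
rewrite /Mb (bigD1 j) //= -[X in X <= _]addr0; apply: lerD; last by rewrite sumr_ge0.
apply: (le_trans (ler_normD _ _)); apply: lerD; last by [].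
apply: (le_trans (ler_normD _ _)); apply: lerD; last exact: dotp_bound.
rewrite normrM; apply: (le_trans _ (Bq_bound (Q j) hN)); rewrite /Bq.
rewrite ger0_norm // -[X in _ <= X]mul1r; apply: ler_wpM2r => //.
by rewrite invf_le1 // ler1n.
Qed.

Lemma small_t p (F : 'I_p -> set 'rV[R]_n) (x d : 'rV[R]_n) :
  (forall i, polyhedral (F i)) ->
  exists2 t, 0 < t & (forall j, t <= 1 /\ (F j (x + (- t) *: d) -> F j x)).
Proof.
move=> hP; apply: fin_small => j.
have [Fx|nFx] := pselect (F j x).
  by exists 1 => // s s0 s1; split.
have [m [A [b eqF]]] := hP j.
rewrite eqF /= in nFx *.
have [l hl] : exists l, b 0 l < (x *m A^T) 0 l.
  apply: contrapT => H; apply: nFx => l; rewrite leNgt; apply/negP => hl.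
  by apply: H; exists l.
set g := (x *m A^T) 0 l - b 0 l.
set c := (d *m A^T) 0 l.
have g0 : 0 < g by rewrite subr_gt0.
have e0 : 0 < `|c| + 1 by rewrite ltr_wpDl.
exists (Num.min 1 (g / (`|c| + 1))); first by rewrite lt_min ltr01 divr_gt0.
move=> s s0; rewrite le_min => /andP[s1 s2]; split => // /(_ l).
have E1 (M N : 'M[R]_(1, m)) i : (M + N) 0 i = M 0 i + N 0 i by rewrite mxE.
have E2 (M : 'M[R]_(1, m)) (k : R) i : (k *: M) 0 i = k * M 0 i by rewrite mxE.
rewrite mulmxDl -scalemxAl E1 E2 -/c.
rewrite ler_pdivlMr // in s2.
have : s * c <= s * `|c| by rewrite ler_pM2l // real_ler_norm // num_real.
rewrite /g in s2 *; move=> h1 h2; exfalso; move: s2 h1 h2; nra.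
Qed.

Lemma lin_cont m (M : 'M[R]_(n, m)) l : continuous (fun z : 'rV[R]_n => (z *m M) 0 l).
Proof.
have -> : (fun z : 'rV[R]_n => (z *m M) 0 l) = (fun z => \sum_(k <- enum 'I_n) z 0 k * M k l).
  by apply: funext => z; rewrite mxE big_enum.
elim: (enum 'I_n) => [|k s IH].
  have -> : (fun z : 'rV[R]_n => \sum_(k0 <- [::]) z 0 k0 * M k0 l) = fun=> 0.
    by apply: funext => z; rewrite big_nil.
  exact: cst_continuous.
have -> : (fun z : 'rV[R]_n => \sum_(k0 <- k :: s) z 0 k0 * M k0 l) =
   (fun z : 'rV[R]_n => z 0 k * M k l) + (fun z : 'rV[R]_n => \sum_(k0 <- s) z 0 k0 * M k0 l).
  by apply: funext => z; rewrite big_cons.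
move=> z; apply: continuousD; last exact: IH.
apply: continuousM; first exact: coord_continuous.
exact: cst_continuous.
Qed.

Lemma polyhedral_closed (P : set 'rV[R]_n) : polyhedral P -> closed P.
Proof.
move=> [m [A [b ->]]].
have -> : [set x : 'rV[R]_n | forall j, (x *m A^T) 0 j <= b 0 j] =
  \bigcap_(j in [set: 'I_m]) ((fun z => (z *m A^T) 0 j) @^-1` [set v | v <= b 0 j]).
  apply/seteqP; split => x /= H j.   by move=> _; exact: H.
  exact: (H j I).
apply: closed_bigI => j _; apply: preimage_closed; last exact: closed_le.
by move=> z _; apply: lin_cont.
Qed.

Lemma cube_compact (r : R) : compact [set v : 'rV[R]_n | forall i, `|v 0 i| <= r].
Proof.
have := @rV_compact R n (fun=> `[- r, r]%classic) (fun=> @segment_compact R _ _).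
congr compact; apply/seteqP; split => v /= H i; have := H i; rewrite /= in_itv /= ler_norml //.
Qed.

Lemma compact_sep (K C : set 'rV[R]_n) : compact K -> closed C -> K `&` C = set0 ->
  exists2 del, 0 < del & forall z y, K z -> C y -> del <= `|z - y|.
Proof.
move=> cK cC KC; rewrite compact_cover in cK.
pose U (k : nat) := [set z : 'rV[R]_n | exists2 e, (k.+1%:R)^-1 < e & forall y, C y -> e <= `|z - y|].
have Uo : forall k, setT k -> open (U k).
  move=> k _; set q : R := (k.+1%:R)^-1; rewrite openE => z [e he hy].
  rewrite /interior; apply/nbhs_ballP; exists ((e - q) / 2).
    by rewrite /= divr_gt0 // subr_gt0.
  move=> w; rewrite -ball_normE /= => bw.
  exists ((e + q) / 2). have he' : q < e := he. suff : q < (e + q) / 2 by []. lra.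
  move=> y Cy; have := hy y Cy; have := ler_distD w z y.
  have bw' : `|z - w| < (e - q) / 2 := bw. move: bw'; lra.
have cov : K `<=` cover setT U.
  move=> z Kz.
  have nCz : ~ C z by move=> Cz; have : (K `&` C) z by []; rewrite KC.
  have nclz : ~ closure C z by move=> /cC.
  have [B [nB CB]] : exists B, nbhs z B /\ C `&` B = set0.
    apply: contrapT => H; apply: nclz => B nB; apply/set0P/negP => /eqP h.
    by apply: H; exists B.
  move/nbhs_ballP: nB => [e e0 eB].
  have hy : forall y, C y -> e <= `|z - y|.
    move=> y Cy; rewrite leNgt; apply/negP => zy.
    have : (C `&` B) y by split => //; apply: eB; rewrite -ball_normE.
    by rewrite CB.
  exists (Num.Def.trunc ((e / 2)^-1)) => //.
  have e0' : (0:R) < e := e0.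
  exists e => //; apply: lt_trans (_ : e / 2 < e); last by lra.
  rewrite -[X in _ < X]invrK ltf_pV2 ?posrE ?invr_gt0 ?divr_gt0 //.
  exact: truncnS_gt.
have [D' _ cD] := cK nat setT U Uo cov.
pose mm := (\max_(k <- finmap.enum_fset D') k)%N.
exists ((mm.+1%:R)^-1); first by rewrite invr_gt0.
move=> z y Kz Cy; have [k kD [e ke hy]] := cD z Kz.
apply: le_trans (hy y Cy); apply: le_trans (ltW ke).
rewrite lef_pV2 ?posrE // ler_nat ltnS.
exact: leq_bigmax_seq.
Qed.

End Helpers.
Arguments compact_sep {R n K C}.
Arguments fbound {R n p f F Q a al z N}.
Arguments small_t {R n p F} x d.
Arguments core2 {R n f Q a al x d xs t}.


Theorem lemma3p4 (R : realType) (n p : nat) (f : 'rV[R]_n -> R)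
    (F : 'I_p -> set 'rV[R]_n) (Q : 'I_p -> 'M[R]_n) (a : 'I_p -> 'rV[R]_n)
    (al : 'I_p -> R) (C : set 'rV[R]_n) :
  strongly_convex f -> plq_rep f F Q a al ->
  C !=set0 -> closed C -> convexS C ->
  forall r : R, 0 < r ->
  exists L : R, 0 < L /\
    forall x xs, norm2 x <= r -> subdiff f x xs ->
      (Fx F x `&` C = set0 -> distf2 f xs x C <= L * (dist x C) ^+ 2) /\
      (Fx F x `&` C !=set0 -> distf2 f xs x C <= L * (dist x (Fx F x `&` C)) ^+ 2).
Proof.
move=> _ hplq [y0 Cy0] cC _ r r0.
have [Fpoly [Fcov Fq]] := hplq.
pose S (J : {set 'I_p}) := [set z : 'rV[R]_n | forall i, i \in J -> F i z].
pose cube := [set v : 'rV[R]_n | forall i, `|v 0 i| <= r].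
have [del del0 Hdel] : exists2 del, 0 < del & forall J : {set 'I_p},
    (S J `&` C = set0 -> forall z y, (cube `&` S J) z -> C y -> del <= `|z - y|).
  apply: fin_small => J.
  have [SC|nSC] := pselect (S J `&` C = set0); last by exists 1 => // s _ _ /nSC.
  have cK : compact (cube `&` S J).
    apply: compact_closedI; first exact: cube_compact.
    have -> : S J = \bigcap_(i in [set i | i \in J]) F i.
      by apply/seteqP; split => z H i Hi; apply: H.
    by apply: closed_bigI => i _; exact: polyhedral_closed.
  have KC : (cube `&` S J) `&` C = set0 by rewrite -setIA SC setI0.
  have [dl dl0 Hd] := compact_sep cK cC KC.
  by exists dl => // s s0 sd _ z y Kz Cy; apply: le_trans sd (Hd z y Kz Cy).
pose rho := 2 * r + norm2 y0.
have rho0 : 0 <= rho by rewrite addr_ge0 ?norm2_ge0 // mulr_ge0 // ltW.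
have hy0 : forall k, `|y0 0 k| <= rho.
  move=> k; apply: le_trans (coord_le_norm2 y0 k) _; rewrite /rho.
  have := norm2_ge0 y0; lra.
pose M := Mb p Q a al rho.
have M0 : 0 <= M by apply: le_trans (normr_ge0 _) (fbound hplq rho0 hy0).
pose Kc := 4 * M + 1.
have Kc0 : 0 < Kc by rewrite /Kc ltr_wpDl // mulr_ge0.
pose L2 := 1 + \sum_j \sum_l \sum_k `|Q j k l|.
have L20 : 0 < L2.
  have : 0 <= \sum_j \sum_l \sum_k `|Q j k l|.
    by apply: sumr_ge0 => j _; apply: sumr_ge0 => l _; apply: sumr_ge0.
  rewrite /L2; lra.
exists (Kc / del ^+ 2 + L2); split.
  by rewrite addr_gt0 // divr_gt0 // exprn_gt0.
move=> x xs xr hsub.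
have hx : forall k, `|x 0 k| <= r by move=> k; apply: le_trans (coord_le_norm2 x k) xr.
have breg0 : forall y, 0 <= bregman f xs x y.
  by move=> y; rewrite /bregman; have := hsub y; lra.
have hinf : forall y, C y -> distf2 f xs x C <= bregman f xs x y.
  move=> y Cy; apply: ge_inf; last by exists y.
  by exists 0 => v [z _ <-].
have D0 : 0 <= distf2 f xs x C.
  by apply: lb_le_inf; [exists (bregman f xs x y0), y0 | move=> v [z _ <-]].
split.
- move=> FC.
  pose Jx := finset (fun i : 'I_p => `[< F i x >]).
  have Sx : S Jx x by move=> i; rewrite inE => /asboolP.
  have SxC : S Jx `&` C = set0.
    apply/seteqP; split => // z [Sz Cz].
    have : (Fx F x `&` C) z.
      split => // i Fix; apply: Sz; rewrite inE; exact/asboolP.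
    by rewrite FC.
  have hd : del <= dist x C.
    apply: lb_le_inf; first by exists (norm2 (x - y0)), y0.
    move=> v [y Cy <-].
    exact: le_trans (Hdel Jx SxC x y (conj hx Sx) Cy) (mx_le_norm2 _).
  have hb : bregman f xs x y0 <= Kc.
    pose z := x + (x - y0).
    have hz := hsub z.
    have zx : z - x = x - y0 by rewrite /z addrAC subrr add0r.
    rewrite zx in hz.
    have hzk : forall k, `|z 0 k| <= rho.
      move=> k; rewrite /z !mxE.
      have := ler_normD (x 0 k) (x 0 k - y0 0 k); have := ler_normB (x 0 k) (y0 0 k).
      have := hx k; have := coord_le_norm2 y0 k; rewrite /rho; lra.
    have hxk : forall k, `|x 0 k| <= rho.
      move=> k; apply: le_trans (hx k) _; rewrite /rho; have := norm2_ge0 y0; have := hx k; 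
      have := normr_ge0 (x 0 k); lra.
    have := fbound hplq rho0 hzk; have := fbound hplq rho0 hxk; have := fbound hplq rho0 hy0.
    rewrite -/M !ler_norml => /andP[a1 a2] /andP[b1 b2] /andP[c1 c2].
    have e : y0 - x = - (x - y0) by rewrite opprB.
    rewrite /bregman e dotpNr.
    move: hz; rewrite /Kc; lra.
  apply: le_trans (hinf y0 Cy0) _; apply: le_trans hb _.
  have dd : del ^+ 2 <= dist x C ^+ 2 by rewrite lerXn2r // ?nnegrE ltW // (lt_le_trans del0 hd).
  have : Kc <= Kc / del ^+ 2 * dist x C ^+ 2.
    rewrite -[X in X <= _](divfK (_ : del ^+ 2 != 0)) ?expf_neq0 ?gt_eqF //.
    apply: ler_wpM2l => //; apply: divr_ge0; [exact: ltW | exact: sqr_ge0].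
  have : 0 <= L2 * dist x C ^+ 2 by rewrite mulr_ge0 ?sqr_ge0 // ltW.
  move=> h1 h2; rewrite mulrDl; lra.
- move=> [w [Fw Cw]].
  have hb : forall y, Fx F x y -> C y -> bregman f xs x y <= L2 * norm2 (x - y) ^+ 2.
    move=> y Fy Cy; pose d := y - x.
    have [t t0 Ht] := small_t x d Fpoly.
    have : (\bigcup_(i in setT) F i) (x + (- t) *: d) by rewrite Fcov.
    case=> j _ Fj; have [t1 Fjx] := Ht j; have Fjx' := Fjx Fj.
    have Fjy : F j y := Fy j Fjx'.
    have [[sQ psd] hq] := Fq j.
    have y_eq : y = x + 1 *: d by rewrite scale1r /d addrC subrK.
    have core := core2 sQ (psd d) (hq x Fjx') (eq_ind y (fun u => f u = _) (hq y Fjy) _ y_eq)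
       (hq _ Fj) (hsub _) t0 t1.
    have -> : bregman f xs x y = f (x + 1 *: d) - f x - dotp xs d by rewrite /bregman -y_eq.
    apply: le_trans core _.
    have hdk : forall k, `|d 0 k| <= norm2 (x - y).
      move=> k; rewrite /d -opprB mxE normrN; exact: coord_le_norm2.
    apply: le_trans (ler_norm _) _; apply: le_trans (Bq_bound (Q j) hdk) _.
    apply: ler_wpM2r; first exact: sqr_ge0.
    rewrite /L2 (bigD1 j) //=.
    have : 0 <= \sum_(i < p | i != j) \sum_l \sum_k `|Q i k l|.
      by apply: sumr_ge0 => i _; apply: sumr_ge0 => l _; apply: sumr_ge0.
    lra.
  set D := distf2 f xs x C.
  set dst := dist x (Fx F x `&` C).
  have hs : Num.sqrt (D / L2) <= dst.
    apply: lb_le_inf; first by exists (norm2 (x - w)), w.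
    move=> v [y [Fy Cy] <-].
    have h1 : D <= L2 * norm2 (x - y) ^+ 2 := le_trans (hinf y Cy) (hb y Fy Cy).
    rewrite -[norm2 (x - y)]ger0_norm ?norm2_ge0 // -sqrtr_sqr ler_sqrt ?sqr_ge0 //.
    by rewrite ler_pdivrMr // mulrC.
  have s0 := sqrtr_ge0 (D / L2).
  have hsq : D / L2 <= dst ^+ 2.
    have := sqr_sqrtr (divr_ge0 D0 (ltW L20)).
    move: s0 hs; set sq := Num.sqrt (D / L2); move=> s0 hs e; rewrite -e; nra.
  have : D <= L2 * dst ^+ 2.
    have e : D = L2 * (D / L2) by rewrite mulrC divfK ?gt_eqF.
    rewrite [X in X <= _]e; apply: ler_wpM2l => //; exact: ltW.
  have : 0 <= Kc / del ^+ 2 * dst ^+ 2.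
    apply: mulr_ge0; last exact: sqr_ge0.
    apply: divr_ge0; [exact: ltW | exact: sqr_ge0].
  move=> h1 h2; rewrite mulrDl; lra.
Qed.
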